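(* If $n\xrightarrow{b|c} m$ is a transition of $\mathcal{D}_{p/q}$, then $$c=(b-(n+1)p)\bmod q\qquad\text{and}\qquad m=\left\lceil \frac{(n+1)p-b}{q}-1\right\rceil .$$
   Context: Let $p>q>1$ be coprime integers, $A_q=\{0,\dots,q-1\}$ and $B=\{p-(2q-1),\dots,p-1\}$. For $n\in\mathbb{N}$ and $a\in\mathbb{Z}$, let $\tau(n,a)=\frac{np+a}{q}$, defined only when $q$ divides $np+a$. For $a\in B$ let $\omega(a)=\{(b,c)\in A_q\times A_q : c-b=a-(p-q)\}$. The transducer $\mathcal{D}_{p/q}$ has state set $\mathbb{N}$, input and output alphabet $A_q$, and a transition $n\xrightarrow{b|c}\tau(n,a)$ (input $b$, output $c$) for every $n\in\mathbb{N}$, $a\in B$ with $\tau(n,a)$ defined, and $(b,c)\in\omega(a)$; no other transitions. Here $x\bmod q\in\{0,\dots,q-1\}$ is the remainder of Euclidean division, and $\lceil x\rceil$ is the integer $k$ with $k-1<x\le k$. *)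

(* Defs.v *)
From Stdlib Require Import ZArith QArith Qround.
Open Scope Z_scope.

(* States are naturals, represented as nonnegative integers. *)
Definition A_q (q x : Z) : Prop := 0 <= x < q.
Definition B (p q a : Z) : Prop := p - (2*q - 1) <= a <= p - 1.

(* tau(n,a) = (n p + a)/q, defined only if q | n p + a:  tau_rel p q n a m  <-> m = tau(n,a) *)
Definition tau_rel (p q n a m : Z) : Prop := q * m = n * p + a.

Definition omega (p q a b c : Z) : Prop :=
  A_q q b /\ A_q q c /\ c - b = a - (p - q).

Definition transition (p q n b c m : Z) : Prop :=
  0 <= n /\ 0 <= m /\ exists a, B p q a /\ tau_rel p q n a m /\ omega p q a b c.

(* Main.v *)
Require Import Defs.
From Stdlib Require Import ZArith QArith Qround Lia.

Theorem mainTheorem4 (p q : Z) (Hq : (1 < q)%Z) (Hpq : (q < p)%Z) (Hcop : Z.gcd p q = 1%Z)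
  (n b c m : Z) :
  transition p q n b c m ->
  c = Z.modulo (b - (n + 1) * p)%Z q /\
  m = Qceiling ((((n + 1) * p - b)%Z # Z.to_pos q) - 1)%Q.
Proof.
  intros [Hn [Hm [a [HB [Ht [[Hb1 Hb2] [[Hc1 Hc2] Hw]]]]]]].
  unfold tau_rel in Ht.
  split.
  - apply Z.mod_unique_pos with (q := (- m - 1)%Z); lia.
  - unfold Qceiling, Qfloor, Qminus, Qplus, Qopp. simpl.
    rewrite Pos.mul_1_r.
    replace (Z.neg (Z.to_pos q)) with (- q)%Z by (rewrite <- Pos2Z.opp_pos, Z2Pos.id by lia; reflexivity).
    rewrite Z2Pos.id by lia.
    assert (E: ((- (((n + 1) * p - b) * 1 + - q)) / q)%Z = (- m)%Z).
    { assert (HH: ((n + 1) * p - b)%Z = (q * (m+1) - c)%Z) by lia. rewrite HH. symmetry. apply Z.div_unique_pos with (r := c). lia. lia. }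
    rewrite E. lia.
Qed.
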